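(* Let $\epsilon>0$, $\delta\ge 0$, $n\ge1$, let $(\mathscr X,\mathscr B)$ be a measurable space, and let $\{\mu_i\}_{i\in I}$ be a set of exchangeable distributions on $\mathscr X^n$. Let $\phi:\mathscr X^n\to[0,1]$ be measurable and satisfy, for all $\underline X,\underline X'\in\mathscr X^n$ with $\delta(\underline X,\underline X')=1$, $$\phi_{\underline X}\le e^\epsilon\phi_{\underline X'}+\delta\quad\text{and}\quad 1-\phi_{\underline X}\le e^\epsilon(1-\phi_{\underline X'})+\delta. \qquad ( * )$$ Define $\phi':\mathscr X^n\to[0,1]$ by $\phi'_{\underline X}=\frac1{n!}\sum_{\pi\in\sigma(n)}\phi_{\pi(\underline X)}$, where $\sigma(n)$ is the symmetric group on $n$ letters acting by permuting coordinates. Then $\phi'$ satisfies $( * )$, $\int\phi'_{\underline X}\,d\mu_i=\int\phi_{\underline X}\,d\mu_i$ for all $i\in I$, and $\phi'$ depends on $\underline X$ only through its empirical distribution $\mathbb P_n$.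
   Context: The Hamming distance on $\mathscr X^n$ is $\delta(\underline X,\underline X')=\#\{i:X_i\ne X'_i\}$. A distribution on $\mathscr X^n$ is exchangeable if it is invariant under permutations of coordinates. The empirical distribution of $\underline X=(X_1,\dots,X_n)$ is $\mathbb P_n(B)=\frac1n\sum_{i=1}^n I_B(X_i)$ for measurable $B\subseteq\mathscr X$; it determines $\underline X$ up to permutation. *)

(* Defs.v *)
From HB Require Import structures.
From mathcomp Require Import all_boot all_order all_algebra all_fingroup.
From mathcomp Require Import all_classical all_reals all_analysis.
Set Implicit Arguments. Unset Strict Implicit. Unset Printing Implicit Defensive.
Import Order.TTheory GRing.Theory Num.Theory.
Local Open Scope classical_set_scope.
Local Open Scope ring_scope.

(* X^n is modelled by n.-tuple X, with the product sigma-algebra that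
   MathComp-Analysis puts on tuples (generated by the coordinate maps). *)

Definition hamming {X : Type} {n : nat} (x x' : n.-tuple X) : nat :=
  #|[set i : 'I_n | `[< tnth x i <> tnth x' i >]]|.

Definition perm_tuple {X : Type} {n : nat} (s : 'S_n) (x : n.-tuple X)
  : n.-tuple X := [tuple tnth x (s i) | i < n].

Definition exchangeable {d} {X : measurableType d} {R : realType} {n : nat}
  (mu : probability (n.-tuple X) R) : Prop :=
  forall (s : 'S_n) (A : set (n.-tuple X)), measurable A ->
    mu (perm_tuple s @^-1` A) = mu A.

Definition empirical {X : Type} {R : realType} {n : nat} (x : n.-tuple X)
  (B : set X) : R :=
  n%:R^-1 * \sum_(i < n) (\1_B (tnth x i) : R).

Definition dp_condition {X : Type} {R : realType} {n : nat}
  (eps delta : R) (phi : n.-tuple X -> R) : Prop :=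
  forall x x' : n.-tuple X, hamming x x' = 1%N ->
    phi x <= expR eps * phi x' + delta /\
    1 - phi x <= expR eps * (1 - phi x') + delta.

Definition symmetrize {X : Type} {R : realType} {n : nat}
  (phi : n.-tuple X -> R) (x : n.-tuple X) : R :=
  (n`!)%:R^-1 * \sum_(s : 'S_n) phi (perm_tuple s x).

(* Main.v *)
Require Import Defs.
From HB Require Import structures.
From mathcomp Require Import all_boot all_order all_algebra all_fingroup.
From mathcomp Require Import all_classical all_reals all_analysis.
Import Order.TTheory GRing.Theory Num.Theory.
Local Open Scope classical_set_scope.
Local Open Scope ring_scope.

Lemma tnth_perm_tuple {X : Type} {n : nat} (s : 'S_n) (x : n.-tuple X) i :
  tnth (perm_tuple s x) i = tnth x (s i).
Proof. by rewrite /perm_tuple tnth_mktuple. Qed.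

Lemma perm_tupleM {X : Type} {n : nat} (s t : 'S_n) (x : n.-tuple X) :
  perm_tuple s (perm_tuple t x) = perm_tuple (s * t) x.
Proof.
by apply: eq_from_tnth => i; rewrite !tnth_perm_tuple permM.
Qed.

Lemma symmetrize_perm {X : Type} {R : realType} {n : nat}
  (phi : n.-tuple X -> R) (t : 'S_n) x :
  symmetrize phi (perm_tuple t x) = symmetrize phi x.
Proof.
rewrite /symmetrize; congr (_ * _).
under eq_bigr do rewrite perm_tupleM.
by rewrite [RHS](reindex_inj (@mulIg _ t)).
Qed.

Lemma hamming_perm {X : Type} {n : nat} (s : 'S_n) (x x' : n.-tuple X) :
  hamming (perm_tuple s x) (perm_tuple s x') = hamming x x'.
Proof.
have h y y' : hamming y y' = #|[set i | `[< tnth y i <> tnth y' i >]]%SET|.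
  by apply: eq_card => i; rewrite !inE /=; apply/idP/idP => [/set_mem //|?]; apply/mem_set.
rewrite !h -[RHS](card_preimset _ (@perm_inj _ s)).
by apply: eq_card => i; rewrite !inE !tnth_perm_tuple.
Qed.

Definition avg {R : realType} {n : nat} (f : 'S_n -> R) : R :=
  (n`!)%:R^-1 * \sum_(s : 'S_n) f s.

Lemma avg_cst {R : realType} {n : nat} (c : R) : avg (fun _ : 'S_n => c) = c.
Proof.
rewrite /avg sumr_const card_Sn -[c *+ _]mulr_natl mulrA mulVf ?mul1r //.

Qed.

Lemma avg_lin {R : realType} {n : nat} (a b : R) (f : 'S_n -> R) :
  avg (fun s => a * f s + b) = a * avg f + b.
Proof.
rewrite /avg big_split /= -mulr_sumr mulrDr mulrCA; congr (_ + _).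
by have := @avg_cst R n b; rewrite /avg.
Qed.

Lemma avg_le {R : realType} {n : nat} (f g : 'S_n -> R) :
  (forall s, f s <= g s) -> avg f <= avg g.
Proof.
move=> fg; rewrite /avg ler_wpM2l ?invr_ge0 ?ler0n //.
by apply: ler_sum => s _.
Qed.

Lemma dp_sym {X : Type} {R : realType} {n : nat} (eps delta : R)
  (phi : n.-tuple X -> R) :
  dp_condition eps delta phi -> dp_condition eps delta (symmetrize phi).
Proof.
move=> H x x' hx; have H' s := H _ _ (etrans (hamming_perm s x x') hx).
have E1 y : symmetrize phi y = avg (fun s => phi (perm_tuple s y)) by [].
have E2 y : 1 - symmetrize phi y = avg (fun s => (-1) * phi (perm_tuple s y) + 1).
  by rewrite avg_lin E1 mulN1r addrC.
split.
  rewrite !E1 -avg_lin; apply: avg_le => s; exact: (H' s).1.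
rewrite !E2 -avg_lin; apply: avg_le => s.
by rewrite !mulN1r ![- _ + 1]addrC; exact: (H' s).2.
Qed.

Lemma sym_bounds {X : Type} {R : realType} {n : nat} (phi : n.-tuple X -> R) :
  (forall x, 0 <= phi x <= 1) -> forall x, 0 <= symmetrize phi x <= 1.
Proof.
move=> H x; have -> : symmetrize phi x = avg (fun s => phi (perm_tuple s x)) by [].
apply/andP; split.
  by rewrite -(@avg_cst R n 0); apply: avg_le => s; case/andP: (H (perm_tuple s x)).
by rewrite -(@avg_cst R n 1); apply: avg_le => s; case/andP: (H (perm_tuple s x)).
Qed.

Lemma measurable_perm_tuple {d} {X : measurableType d} {n : nat} (s : 'S_n) :
  measurable_fun [set: n.-tuple X] (perm_tuple s).
Proof.
apply/measurable_fun_tnthP => i.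
have -> : (@tnth n X ^~ i \o perm_tuple s) = @tnth n X ^~ (s i).
  by apply/funext => x /=; rewrite tnth_perm_tuple.
exact: measurable_tnth.
Qed.

Lemma integral_perm {R : realType} {n : nat} {d} {X : measurableType d}
  (mu : probability (n.-tuple X) R) (phi : n.-tuple X -> R) (s : 'S_n) :
  exchangeable mu -> measurable_fun setT phi -> (forall x, 0 <= phi x) ->
  (\int[mu]_x (phi (perm_tuple s x))%:E = \int[mu]_x (phi x)%:E)%E.
Proof.
move=> ex mphi phi0.
have mps := measurable_perm_tuple (X:=X) s.
have := ge0_integral_pushforward mps mu (D := setT) (f := fun x => (phi x)%:E)
  measurableT (proj2 (measurable_realfun.measurable_EFinP _ _) mphi) (fun y _ => phi0 y).
rewrite preimage_setT /= => <-.
apply: eq_measure_integral => A mA _.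
exact: ex s A mA.
Qed.

Lemma natmul_mule (R : realType) (x : \bar R) N : ((N%:R)%:E * x)%E = (x *+ N)%R.
Proof. rewrite mule_natl; reflexivity. Qed.

Lemma integral_sym {R : realType} {n : nat} {d} {X : measurableType d}
  (mu : probability (n.-tuple X) R) (phi : n.-tuple X -> R) :
  exchangeable mu -> measurable_fun setT phi -> (forall x, 0 <= phi x) ->
  (\int[mu]_x (symmetrize phi x)%:E = \int[mu]_x (phi x)%:E)%E.
Proof.
move=> ex mphi phi0.
have mps s : measurable_fun setT (fun x => phi (perm_tuple s x)).
  exact: measurableT_comp mphi (measurable_perm_tuple s).
have c0 : 0 <= (n`!)%:R^-1 :> R by rewrite invr_ge0 ler0n.
rewrite (eq_integral (fun x => ((n`!)%:R^-1)%:E *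
   \sum_(s : 'S_n) (phi (perm_tuple s x))%:E)%E); last first.
  by move=> x _; rewrite /symmetrize EFinM sumEFin.
rewrite ge0_integralZl_EFin //; last 2 first.
- by move=> x _; rewrite sumEFin lee_fin; apply: sumr_ge0 => s _.
- apply: emeasurable_sum => s.
  exact/measurable_realfun.measurable_EFinP.
rewrite ge0_integral_sum //; last 2 first.
- by move=> s; apply/measurable_realfun.measurable_EFinP.
- by move=> s x _; rewrite lee_fin.
under eq_bigr do rewrite integral_perm //.
rewrite sumr_const card_Sn -natmul_mule muleA -EFinM mulVf ?mul1e //.

Qed.

Section atoms.
Context {d} {X : measurableType d}.

Definition Eqv (p q : X) : Prop := forall B, measurable B -> (B p <-> B q).

Lemma Eqv_refl p : Eqv p p. Proof. by []. Qed.
Lemma Eqv_sym p q : Eqv p q -> Eqv q p.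
Proof. by move=> h B mB; split => /(h B mB). Qed.
Lemma Eqv_trans p q r : Eqv p q -> Eqv q r -> Eqv p r.
Proof. by move=> h1 h2 B mB; split => [/(h1 B mB)/(h2 B mB)|/(h2 B mB)/(h1 B mB)]. Qed.

Lemma atom_tuple n (y y' : n.-tuple X) :
  (forall i, Eqv (tnth y i) (tnth y' i)) ->
  forall A, measurable A -> (A y <-> A y').
Proof.
move=> H; apply: smallest_sub.
  split.
  - by split => -[].
  - by move=> A hA; split => -[_ h]; split => // h'; apply: h; [exact: hA.2 h'|exact: hA.1 h'].
  - move=> F hF; split => -[k _ h]; exists k => //; [exact: (hF k).1 h|exact: (hF k).2 h].
apply: (big_ind (fun F => F `<=` [set A | A y <-> A y'])).
- by [].
- by move=> F G hF hG; rewrite subUset; split.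
move=> i _ A [B mB <-] /=; split => -[_ h]; split => //=.
  exact/(H i B mB).
exact/(H i B mB).
Qed.

Lemma phi_atom {R : realType} n (phi : n.-tuple X -> R) (y y' : n.-tuple X) :
  measurable_fun setT phi ->
  (forall i, Eqv (tnth y i) (tnth y' i)) -> phi y = phi y'.
Proof.
move=> mphi H.
have mA := mphi measurableT _ (measurable_set1 (phi y)).
have [_ ->] := (atom_tuple _ _ _ H _ mA).1 (conj I erefl) => //.
Qed.

Lemma sepset (L : seq X) (p0 : X) : exists C, measurable C /\
  (forall p, Eqv p p0 -> C p) /\ (forall p, p \in L -> C p -> Eqv p p0).
Proof.
elim: L => [|q L [C [mC [h1 h2]]]].
  by exists setT; split => //; split.
case: (pselect (Eqv q p0)) => hq.
  exists C; split => //; split => // p; rewrite inE => /orP [/eqP -> _|pL].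
    exact: hq.
  exact: h2.
have [B [mB [Bp0 nBq]]] : exists B, measurable B /\ B p0 /\ ~ B q.
  move: hq => /existsNP [B] /not_implyP [mB nIff].
  case: (pselect (B p0)) => Bp0.
    by exists B; split => //; split => // Bq; apply: nIff.
  exists (~` B); split; first exact: measurableC.
  split => // nBq; apply: nIff; split => h; exfalso; [exact: nBq|exact: Bp0].
exists (C `&` B); split; first exact: measurableI.
split.
  by move=> p hp; split; [exact: h1|exact/(hp B mB)].
move=> p; rewrite inE => /orP [/eqP -> [_ //]|pL [Cp _]].
exact: h2.
Qed.

Lemma sum_indic_count {R : realType} n (x : n.-tuple X) (C : set X) :
  \sum_(i < n) (\1_C (tnth x i) : R) = (count (fun p => p \in C) x)%:R.
Proof.
rewrite -(big_tuple _ _ x xpredT (fun a => (\1_C a : R))); elim: (val x) => [|a s IH]; first by rewrite big_nil.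
by rewrite big_cons IH /= natrD indicE.
Qed.

Lemma perm_match {R : realType} n (x x' : n.-tuple X) : (0 < n)%N ->
  (forall B, measurable B -> (empirical x B : R) = empirical x' B) ->
  exists s : 'S_n, forall i, Eqv (tnth x (s i)) (tnth x' i).
Proof.
move=> n0 hemp.
pose L : seq X := x ++ x'.
pose g p := [seq `[< Eqv p q >] | q <- L].
have gE p q : q \in L -> g p = g q -> Eqv p q.
  move=> qL /eq_in_map /(_ q qL) h.
  by apply/asboolP; rewrite h; apply/asboolP.
have gE2 p q : Eqv p q -> g p = g q.
  move=> h; apply/eq_map => r; apply/idP/idP => /asboolP h'; apply/asboolP.
    exact: Eqv_trans _ _ _ (Eqv_sym _ _ h) h'.
  exact: Eqv_trans _ _ _ h h'.
have cnt p0 : p0 \in L -> count (fun p => g p == g p0) x' = count (fun p => g p == g p0) x.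
  move=> p0L; have [C [mC [h1 h2]]] := sepset L p0.
  have E (s : seq X) : {subset s <= L} ->
      count (fun p => g p == g p0) s = count (fun p => p \in C) s.
    move=> sL; apply: eq_in_count => p /sL pL; apply/idP/idP.
      by move=> /eqP e; apply: mem_set; apply: h1; exact: gE _ _ p0L e.
    by move=> hC; rewrite (gE2 _ _ (h2 _ pL (set_mem hC))).
  rewrite !E; last 2 first.
  - by move=> p px; rewrite mem_cat px.
  - by move=> p px; rewrite mem_cat px orbT.
  have := hemp C mC; rewrite /empirical !sum_indic_count.
  move=> /(mulfI _) h; apply/eqP; rewrite -(eqr_nat R) (h _) //.
  by rewrite invr_eq0 pnatr_eq0 -lt0n.
have pe : perm_eq (map g x') (map_tuple g x).
  apply/allP => b; rewrite mem_cat => hb.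
  have [p0 p0L ->] : exists2 p0, p0 \in L & b = g p0.
    case/orP: hb => /mapP [p0 hp0 ->]; exists p0 => //; rewrite mem_cat hp0 ?orbT //.
  by rewrite /= !count_map cnt.
have [s hs] := tuple_permP pe.
exists s => i; apply: Eqv_sym; apply: gE.
  by rewrite mem_cat mem_tnth.
have : map_tuple g x' = [tuple tnth (map_tuple g x) (s i) | i < n].
  by apply: val_inj.
by move=> /(congr1 (fun t => tnth t i)); rewrite tnth_map tnth_mktuple tnth_map.
Qed.

End atoms.

Lemma sym_emp {R : realType} {n : nat} {d} {X : measurableType d}
  (phi : n.-tuple X -> R) : (0 < n)%N -> measurable_fun setT phi ->
  forall x x' : n.-tuple X,
    (forall B : set X, measurable B -> (empirical x B : R) = empirical x' B) ->
    symmetrize phi x = symmetrize phi x'.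
Proof.
move=> n0 mphi x x' hemp.
have [s hs] := perm_match _ _ _ n0 hemp.
rewrite -(symmetrize_perm phi s x) /symmetrize; congr (_ * _).
apply: eq_bigr => t _; apply: phi_atom => // j.
by rewrite !tnth_perm_tuple.
Qed.

Theorem theorem1 (R : realType) (eps delta : R) (n : nat)
  (d : measure_display) (X : measurableType d)
  (I : Type) (mu : I -> probability (n.-tuple X) R)
  (phi : n.-tuple X -> R) :
  0 < eps -> 0 <= delta -> (1 <= n)%N ->
  (forall i, exchangeable (mu i)) ->
  measurable_fun setT phi ->
  (forall x, 0 <= phi x <= 1) ->
  dp_condition eps delta phi ->
  [/\ (forall x, 0 <= symmetrize phi x <= 1),
      dp_condition eps delta (symmetrize phi),
      (forall i, (\int[mu i]_x (symmetrize phi x)%:E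
                  = \int[mu i]_x (phi x)%:E)%E) &
      (forall x x' : n.-tuple X,
         (forall B : set X, measurable B ->
            (empirical x B : R) = empirical x' B) ->
         symmetrize phi x = symmetrize phi x')].
Proof.
move=> _ _ n1 ex mphi hb hdp; split.
- exact: sym_bounds.
- exact: dp_sym.
- move=> i; apply: integral_sym => // x; by case/andP: (hb x).
- exact: sym_emp.
Qed.
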